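(* Assume $X_0\in L^\infty$, $\beta\in\mathbb{R}$, $\lambda>0$. Let $w\in\mathscr{W}^{\mathrm{icx}}$. If $w(1)>w(1-)$, then $\inf_{Q\in\mathscr{Q}}L(Q,w;\beta,\lambda)=-\infty$.
   Context: $(\Omega,\mathcal{F},\mathbb{P})$ is a complete nonatomic probability space. $\rho\in L^2$ with $\mathbb{P}(\rho>0)=1$ and $\mathrm{Var}[\rho]>0$. For a random variable $X$, $Q_X(t)=\inf\{y:\mathbb{P}(X\le y)>t\}$ for $t\in[0,1)$, $Q_X(1):=\lim_{t\uparrow1}Q_X(t)$; $Q_0:=Q_{X_0}$. $\mathscr{Q}$ is the set of increasing, right-continuous $Q:[0,1)\to\mathbb{R}$ with $\int_0^1Q^2<\infty$ (extended by $Q(1)=Q(1-)$). $\mathscr{W}^{\mathrm{icx}}$ is the set of increasing convex $w:[0,1]\to[0,\infty)$ with $w(0)=0$; each $w$ is identified with the finite Borel measure on $[0,1]$ with distribution function $w$ (with $w(0-):=0$), so $\{1\}$ has mass $w(1)-w(1-)$. Define $$L(Q,w;\beta,\lambda)=\int_0^1(Q(s)-\beta)^2ds+\lambda\int_0^1Q(s)Q_\rho(1-s)ds-\Big(\int_{[0,1]}Q(s)dw(s)-\int_{[0,1]}Q_0(s)dw(s)\Big).$$ *)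

(* Defs.v *)
From HB Require Import structures.
From mathcomp Require Import all_boot all_order all_algebra.
From mathcomp Require Import all_classical all_reals all_analysis.
Set Implicit Arguments. Unset Strict Implicit. Unset Printing Implicit Defensive.
Import Order.TTheory GRing.Theory Num.Theory.
Import numFieldNormedType.Exports.
Local Open Scope classical_set_scope.
Local Open Scope ring_scope.

Definition nonatomic d (T : measurableType d) (R : realType)
  (mu : {measure set T -> \bar R}) : Prop :=
  forall A : set T, measurable A -> (0 < mu A)%E ->
    exists B : set T, [/\ measurable B, B `<=` A & (0 < mu B)%E /\ (mu B < mu A)%E].

(* Quantile function Q_X(t) = inf { y : P(X <= y) > t }, meaningful for
   t in [0,1).  (Outside [0,1) the value is irrelevant.) *)
Definition quantile d (T : measurableType d) (R : realType)
  (P : probability T R) (X : T -> R) (t : R) : R :=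
  inf [set y : R | (t%:E < P [set om | (X om <= y)%R])%E].

(* Extension of a function Q given on [0,1) to [0,1] by Q(1) := Q(1-),
   with values in the extended reals (Q(1-) may be +oo for Q in L^2). *)
Definition qext (R : realType) (Q : R -> R) (s : R) : \bar R :=
  if s < 1 then (Q s)%:E else lim ((Q t)%:E @[t --> 1^'-]).

Definition Qset (R : realType) : set (R -> R) :=
  [set Q : R -> R | {in `[0%R, 1%R[ &, forall s t, s <= t -> Q s <= Q t}
         /\ (forall s, 0 <= s < 1 -> Q t @[t --> s^'+] --> Q s)
         /\ (\int[lebesgue_measure]_(s in `[0%R, 1%R[) ((Q s) ^+ 2)%:E < +oo)%E].

Definition Wicx (R : realType) : set (R -> R) :=
  [set w : R -> R | {in `[0%R, 1%R] &, forall s t, s <= t -> w s <= w t}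
         /\ (forall x y t, 0 <= x <= 1 -> 0 <= y <= 1 -> 0 <= t <= 1 ->
               w ((1 - t) * x + t * y) <= (1 - t) * w x + t * w y)
         /\ (forall s, 0 <= s <= 1 -> 0 <= w s)
         /\ w 0 = 0].

(* mu is the finite Borel measure on [0,1] with distribution function w
   (with w(0-) := 0): mu(]-oo, x]) = 0 for x < 0, w(x) for x in [0,1],
   and w(1) for x > 1. *)
Definition is_measure_of_w (R : realType) (w : R -> R)
  (mu : {measure set R -> \bar R}) : Prop :=
  forall x : R, mu `]-oo, x]%classic =
    (if x < 0 then 0 else if x <= 1 then w x else w 1)%:E.

Definition Lfunctional (R : realType) (Q Q0 Qrho : R -> R)
  (mu : {measure set R -> \bar R}) (beta lambda : R) : \bar R :=
  (\int[lebesgue_measure]_(s in `[0%R, 1%R[) (((Q s - beta) ^+ 2)%:E)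
   + lambda%:E * \int[lebesgue_measure]_(s in `[0%R, 1%R[) ((Q s * Qrho (1 - s))%:E)
   - (\int[mu]_(s in `[0%R, 1%R]) qext Q s - \int[mu]_(s in `[0%R, 1%R]) qext Q0 s))%E.

(* Main.v *)
Require Import Defs.
From HB Require Import structures.
From mathcomp Require Import all_boot all_order all_algebra.
From mathcomp Require Import all_classical all_reals all_analysis.
From mathcomp Require Import unstable measurable_realfun ess_sup_inf. 
From mathcomp Require Import lra.
Set Implicit Arguments. Unset Strict Implicit. Unset Printing Implicit Defensive.
Import Order.TTheory GRing.Theory Num.Theory.
Import numFieldNormedType.Exports.
Local Open Scope classical_set_scope.
Local Open Scope ring_scope.
Section S.
Context {R : realType}.
Local Notation mu := (@lebesgue_measure R).

Lemma invsqrt_FTC (a : R) : 0 < a < 1 ->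
  (\int[mu]_(x in `[a, 1%R]) ((Num.sqrt x)^-1)%:E = (2 - 2 * Num.sqrt a)%:E)%E.
Proof.
move=> /andP[a0 a1].
pose F x : R := 2 * Num.sqrt x.
have dF (x : R) : 0 < x -> is_derive x 1 F ((Num.sqrt x)^-1).
  move=> x0.
  have h := @is_deriveZ R R R Num.sqrt 2 x 1 _ (is_derive1_sqrt x0).
  have -> : (Num.sqrt x)^-1 = 2 *: (2 * Num.sqrt x)^-1.
    by rewrite /GRing.scale /= invfM mulrA divff ?mul1r.
  exact: h.
have cF : continuous F.
  by move=> x; apply: cvgM; [exact: cvg_cst | exact: sqrt_continuous].
have -> : (2 - 2 * Num.sqrt a) = F 1 - F a by rewrite /F sqrtr1 mulr1.
rewrite EFinB.
apply: continuous_FTC2 => //.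
- apply: continuous_in_subspaceT => x; rewrite inE /= in_itv /= => /andP[ax _].
  apply: continuousV; first by rewrite gt_eqF // sqrtr_gt0 (lt_le_trans a0 ax).
  exact: sqrt_continuous.
- split.
  + move=> x; rewrite in_itv /= => /andP[ax _].
    by have := dF x (lt_trans a0 ax) => -[].
  + by apply: cvg_at_right_filter; exact: cF.
  + by apply: cvg_at_left_filter; exact: cF.
- move=> x; rewrite in_itv /= => /andP[ax _].
  rewrite derive1E; apply: derive_val; exact: dF (lt_trans a0 ax).
Qed.
Definition gs (s : R) : R := (Num.sqrt (1 - s))^-1.

Lemma gs_ge0 s : 0 <= gs s.
Proof. by rewrite /gs invr_ge0 sqrtr_ge0. Qed.

Lemma gs_cont s : s < 1 -> {for s, continuous gs}.
Proof.
move=> s1; rewrite /gs.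
apply: continuousV.
  by rewrite gt_eqF // sqrtr_gt0 subr_gt0.
apply: continuous_comp; last exact: sqrt_continuous.
by apply: continuousB; [exact: cvg_cst | exact: cvg_id].
Qed.

Lemma gs_int_le r : 0 <= r < 1 ->
  (\int[mu]_(x in `[0%R, r]) (gs x)%:E <= 2%:E)%E.
Proof.
move=> /andP[r0 r1].
have [->|r0'] := eqVneq r 0.
  by rewrite set_itv1 integral_set1 lee_fin.
have rpos : 0 < r by rewrite lt_neqAle eq_sym r0' r0.
rewrite integration_by_substitution_onem; last 2 first.
- by rewrite r0 ltW.
- apply: continuous_in_subspaceT => x; rewrite inE /= in_itv /= => /andP[_ xr].
  exact: gs_cont (le_lt_trans xr r1).
under eq_integral do rewrite /gs /onem subKr.
rewrite invsqrt_FTC; last by rewrite onem_gt0 //= onem_lt1.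
rewrite lee_fin gerBl mulr_ge0 // sqrtr_ge0.
Qed.

Lemma gs_mfun : measurable_fun (`[0%R, 1%R[ : set R) gs.
Proof.
apply: (@measurable_funS _ _ _ _ (`]-oo, 1%R[ : set R)) => //.
  by move=> x /=; rewrite !in_itv /= => /andP[].
apply: open_continuous_measurable_fun; first exact: interval_open.
by move=> x; rewrite inE /= in_itv /= => x1; exact: gs_cont.
Qed.

Lemma gs_int : (\int[mu]_(x in `[0%R, 1%R[) (gs x)%:E <= 2%:E)%E.
Proof.
pose F (n : nat) := `[0%R, 1 - (n.+2%:R)^-1]%classic : set R.
have FU : \bigcup_n F n = `[0%R, 1%R[%classic.
  apply/seteqP; split => x /=.
    move=> [n _]; rewrite /F /= !in_itv /= => /andP[-> /le_lt_trans]; apply.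
    by rewrite gtrBl invr_gt0.
  rewrite in_itv /= => /andP[x0 x1].
  have [k hk] := ltr_add_invr x1.
  exists k => //; rewrite /F /= in_itv /= x0 /= lerBrDr addrC.
  apply: ltW; apply: le_lt_trans hk; rewrite addrC lerD2l lef_pV2 ?posrE //.
  by rewrite ler_nat.
have mF n : measurable (F n) by exact: measurable_itv.
have ndF : nondecreasing_seq F.
  move=> m n mn; apply/subsetPset => x; rewrite /F /= !in_itv /= => /andP[-> xm] /=.
  apply: le_trans xm _; rewrite lerD2l lerN2 lef_pV2 ?posrE // ler_nat.
  by rewrite ltnS ltnS.
have mf n : measurable_fun (F n) (fun x => (gs x)%:E).
  apply/measurable_EFinP; apply: (measurable_funS _ _ gs_mfun) => //.
  by rewrite -FU; exact: bigcup_sup.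
have f0 n x : F n x -> (0 <= (gs x)%:E)%E by rewrite lee_fin gs_ge0.
have H := @ge0_nondecreasing_set_cvg_integral _ (measurableTypeR R) R F
  (fun x => (gs x)%:E) mu ndF mF mf f0.
rewrite FU in H.
rewrite -(cvg_lim _ H) //.
apply: lime_le; first by apply/cvg_ex; eexists; exact: H.
apply: nearW => n; rewrite /F; apply: gs_int_le.
by rewrite subr_ge0 invf_le1 ?ler1n //= gtrBl invr_gt0.
Qed.
Definition Qs (s : R) : R := Num.sqrt (gs s).

Lemma Qs_ge0 s : 0 <= Qs s. Proof. exact: sqrtr_ge0. Qed.

Lemma Qs_sqr s : Qs s ^+ 2 = gs s.
Proof. by rewrite /Qs sqr_sqrtr // gs_ge0. Qed.

Lemma Qs_cont s : s < 1 -> {for s, continuous Qs}.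
Proof.
move=> s1; apply: continuous_comp; first exact: gs_cont.
exact: sqrt_continuous.
Qed.

Lemma Qs_mono s t : s <= t -> t < 1 -> Qs s <= Qs t.
Proof.
move=> st t1; rewrite /Qs ler_sqrt ?gs_ge0 // /gs.
have s1 : s < 1 by apply: le_lt_trans t1.
rewrite lef_pV2 ?posrE ?sqrtr_gt0 ?subr_gt0 //.
rewrite ler_sqrt ?subr_ge0 ?(ltW t1) //; lra.
Qed.

Lemma Qs_in : Qset Qs.
Proof.
split; [|split].
- move=> s t _ H; move: H; rewrite /in_mem /= => /andP[_]; rewrite ?bnd_simp => t1 st.
  exact: Qs_mono.
- move=> s /andP[_ s1]; apply: cvg_at_right_filter; exact: Qs_cont.
- under eq_integral do rewrite Qs_sqr.
  by apply: le_lt_trans gs_int _; exact: ltry.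
Qed.

Lemma Qs_cvgy : (Qs t)%:E @[t --> 1^'-] --> +oo%E.
Proof.
apply/cvgeryP/cvgryPge => A.
have [A0|A0] := lerP A 0.
  by apply: nearW => t; apply: le_trans A0 (Qs_ge0 t).
have e0 : 0 < (A ^+ 4)^-1 by rewrite invr_gt0 exprn_gt0.
have t1 : \forall t \near (1:R)^'-, t < 1.
  by rewrite near_withinE; apply: nearW.
near=> t.
have ht1 : t < 1 by near: t.
have he : 1 - t < (A ^+ 4)^-1 by near: t; exact: nbhs_left_ltBl.
have p : 0 < 1 - t by rewrite subr_gt0.
rewrite /Qs -(ger0_norm (ltW A0)) -sqrtr_sqr ler_sqrt ?gs_ge0 //.
rewrite /gs -[A ^+ 2]invrK lef_pV2 ?posrE ?sqrtr_gt0 ?invr_gt0 ?exprn_gt0 //.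
have B0 : 0 <= (A ^+ 2)^-1 by rewrite invr_ge0 exprn_ge0 // ltW.
rewrite -(ger0_norm B0) -sqrtr_sqr ler_sqrt ?sqr_ge0 //.
by rewrite exprVn -exprM ltW.
Unshelve. all: by end_near.
Qed.

End S.
Section G.
Context d (T : measurableType d) (R : realType) (mu : {measure set T -> \bar R}).
Local Open Scope ereal_scope.

Lemma le_int_nm (D1 D2 : set T) (f g : T -> \bar R) :
  (forall x, D1 x -> 0 <= f x) -> (forall x, D2 x -> 0 <= g x) ->
  (forall x, (f \_ D1) x <= (g \_ D2) x) ->
  \int[mu]_(x in D1) f x <= \int[mu]_(x in D2) g x.
Proof.
move=> f0 g0 fg; rewrite (ge0_integralE mu f0) (ge0_integralE mu g0).
apply: ereal_sup_le => _ [h hf <-]; exists h => //= x.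
exact: le_trans (hf x) (fg x).
Qed.

Lemma int_ub_nm (D : set T) (f : T -> \bar R) (M : R) :
  measurable D -> mu D < +oo -> (0 <= M)%R ->
  (forall x, D x -> f x <= M%:E) -> \int[mu]_(x in D) f x < +oo.
Proof.
move=> mD muD M0 fM; rewrite integralE.
have h1 : \int[mu]_(x in D) f^\+ x <= \int[mu]_(x in D) (cst M%:E) x.
  apply: le_int_nm; [by move=> x _; exact: funepos_ge0 | by move=> x _; rewrite lee_fin | ].
  move=> x; rewrite /patch; case: ifPn => [/set_mem Dx|_]; last by [].
    by rewrite funeposE ge_max fM // lee_fin M0.
rewrite integral_cst // in h1.
have h2 : 0 <= \int[mu]_(x in D) f^\- x by apply: integral_ge0 => x _; exact: funeneg_ge0.
apply: (le_lt_trans (leeB (lexx _) h2)); rewrite sube0.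
apply: (le_lt_trans h1).
have : mu D \is a fin_num by rewrite ge0_fin_numE.
by move=> /fineK <-; rewrite -EFinM ltry.
Qed.

End G.
Lemma mu1_pos (R : realType) (w : R -> R) (w_icx : Wicx w)
  (mu : {measure set R -> \bar R}) (mu_w : is_measure_of_w w mu)
  (w_jump : lim (w t @[t --> 1^'-]) < w 1) : (0 < mu [set 1%R])%E.
Proof.
case: w_icx => wmono _.
have wle s t : 0 <= s -> s <= t -> t <= 1 -> w s <= w t.
  move=> s0 st t1; apply: wmono => //; rewrite /in_mem /= /pred_of_itv /= subitvE !bnd_simp.
  - by rewrite s0 (le_trans st t1).
  - by rewrite t1 (le_trans s0 st).
have [m1|m1] := eqVneq (mu [set 1%R]) 0%E; last by rewrite lt0e m1 measure_ge0.
have mc1 : mu `]-oo, 1%R]%classic = (w 1)%:E by rewrite mu_w ltr10 lexx.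
have mo1 : mu `]-oo, 1%R[%classic = (w 1)%:E.
  have E : mu `]-oo, 1%R]%classic = mu (`]-oo, 1%R[%classic `|` [set 1%R]).
    congr (mu _); apply/seteqP; split => x /=; rewrite !in_itv /=.
      by rewrite le_eqVlt => /orP[/eqP ->|->]; [right|left].
    by case=> [/ltW|->].
  rewrite E measureU //= in mc1; last first.
    by apply/seteqP; split => x //= []; rewrite in_itv /= => + x1; rewrite x1 ltxx.
  by rewrite m1 adde0 in mc1.
pose r (n : nat) : R := 1 - (n.+2%:R)^-1.
have r0 n : 0 <= r n by rewrite subr_ge0 invf_le1 ?ler1n //.
have r1 n : r n < 1 by rewrite /r gtrBl invr_gt0.
pose A n := `]-oo, r n]%classic : set R.
have AU : \bigcup_n A n = `]-oo, 1%R[%classic.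
  apply/seteqP; split => x /=.
    by move=> [n _]; rewrite /A /= !in_itv /= => /le_lt_trans; apply.
  rewrite in_itv /= => x1.
  have [k hk] := ltr_add_invr x1.
  exists k => //; rewrite /A /= in_itv /= /r lerBrDr addrC.
  apply: ltW; apply: le_lt_trans hk; rewrite addrC lerD2l lef_pV2 ?posrE //.
  by rewrite ler_nat.
have ndA : nondecreasing_seq A.
  move=> m n mn; apply/subsetPset => x; rewrite /A /= !in_itv /= => xm.
  apply: le_trans xm _; rewrite lerD2l lerN2 lef_pV2 ?posrE // ler_nat.
  by rewrite ltnS ltnS.
have := @nondecreasing_cvg_mu _ _ _ mu A (fun n => measurable_itv _) _ ndA.
rewrite AU mo1 => /(_ (measurable_itv _)) /fine_cvg.
have -> : fine \o (mu \o A) = fun n => w (r n).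
  apply/funext => n /=; rewrite /A mu_w.
  by rewrite ltNge r0 /= (ltW (r1 n)).
move=> hw.
have : w t @[t --> 1^'-] --> w 1.
  apply/cvgrPdist_lt => e e0.
  have [N _ HN] := (proj1 (cvgrPdist_lt _ _) hw) e e0.
  have t1 : \forall t \near (1:R)^'-, t < 1.
    by rewrite near_withinE; apply: nearW.
  near=> t.
  have ht1 : t < 1 by near: t.
  have hNt : r N < t by near: t; exact: nbhs_left_gt.
  have := HN N (leqnn N); rewrite /= !ger0_norm ?subr_ge0.
  - apply: le_lt_trans; rewrite lerD2l lerN2.
    exact: (wle _ _ (r0 N) (ltW hNt) (ltW ht1)).
  - exact: (wle _ _ (ltW (le_lt_trans (r0 N) hNt)) (ltW ht1) (lexx _)).
  - exact: (wle _ _ (r0 N) (ltW (r1 N)) (lexx _)).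
move=> /cvg_lim => /(_ (@Rhausdorff R)) hl.
by move: w_jump; rewrite hl ltxx.
Unshelve. all: by end_near.
Qed.
Lemma Linf_bound (R : realType) (d : measure_display) (Omega : measurableType d)
  (P : probability Omega R) (X0 : Omega -> R) (X0_Linf : X0 \in Lfun P +oo%E) :
  exists M : R, 0 <= M /\ P [set om | X0 om <= M] = 1%E.
Proof.
have mX : measurable_fun setT X0 := set_mem (sub_Lfun_mfun X0_Linf).
have fX := set_mem (sub_Lfun_finLfun X0_Linf).
move: fX; rewrite /finite_norm unlock /= probability_setT lte01.
have -> : abse \o (EFin \o X0) = EFin \o (Num.norm \o X0) by apply/funext.
move=> /ess_supr_bounded [M [N [mN PN0 HN]]].
exists `|M|; split => //.
have mS : measurable [set om | X0 om <= `|M|].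
  have := mX measurableT _ (measurable_itv `]-oo, `|M|]); rewrite setTI.
  by congr measurable; apply/seteqP; split => x /=; rewrite in_itv /=.
apply/eqP; rewrite eq_le probability_le1 //=.
rewrite -(probability_setT P).
have : [set: Omega] `<=` N `|` [set om | X0 om <= `|M|].
  move=> x _; have [xN|xN] := pselect (N x); first by left.
  right => /=; apply: (le_trans (ler_norm (X0 x))).
  have : ~ (~` [set x | `|X0 x| <= M]) x by move=> /HN.
  move=> /contrapT /= h; exact: le_trans h (ler_norm M).
move=> /(le_measure P); rewrite !inE => /(_ measurableT (measurableU _ _ mN mS)).
move=> h; apply: (le_trans h); apply: (le_trans (measureU2 _ _ _)) => //.
first [by have -> : P N = 0%E by exact: PN0; rewrite add0e | by move: PN0 => /= ->; rewrite add0e | by rewrite (eq_refl : True) ]. Qed.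

Lemma quant_le (R : realType) (d : measure_display) (Omega : measurableType d)
  (P : probability Omega R) (X : Omega -> R) (M : R) :
  0 <= M -> P [set om | X om <= M] = 1%E -> forall t, t < 1 -> quantile P X t <= M.
Proof.
move=> M0 PM t t1; rewrite /quantile.
set S := [set y : R | _].
have MS : S M by rewrite /S /= PM lte_fin.
have [lb|nlb] := pselect (has_lbound S).
  exact: ge_inf.
by rewrite inf_out // => -[].
Qed.

Lemma qext_le (R : realType) (Q : R -> R) (M : R) :
  0 <= M -> (forall t, t < 1 -> Q t <= M) -> forall s, (qext Q s <= M%:E)%E.
Proof.
move=> M0 QM s; rewrite /qext; case: ifPn => [s1|_]; first by rewrite lee_fin QM.
have [c|nc] := pselect (cvg ((Q t)%:E @[t --> 1^'-])).
  apply: lime_le => //.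
  have t1 : \forall t \near (1:R)^'-, t < 1.
    by rewrite near_withinE; apply: nearW.
  by near=> t; rewrite lee_fin QM //; near: t.
by rewrite dvgP // lee_fin.
Unshelve. all: by end_near.
Qed.

Unset Implicit Arguments.
Set Strict Implicit.

Theorem lemma5p1 (R : realType) (d : measure_display) (Omega : measurableType d)
  (P : probability Omega R)
  (P_complete : measure_is_complete P) (P_nonatomic : nonatomic P)
  (rho : Omega -> R) (rho_L2 : rho \in Lfun P 2%:E)
  (rho_pos : P [set om | 0 < rho om] = 1%E)
  (rho_var : (0 < 'V_P[rho])%E)
  (X0 : Omega -> R) (X0_Linf : X0 \in Lfun P +oo%E)
  (beta lambda : R) (lambda_pos : 0 < lambda)
  (w : R -> R) (w_icx : Wicx w)
  (mu : {measure set R -> \bar R}) (mu_w : is_measure_of_w w mu)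
  (w_jump : lim (w t @[t --> 1^'-]) < w 1) :
  ereal_inf [set Lfunctional Q (quantile P X0) (quantile P rho) mu beta lambda
            | Q in @Qset R] = -oo%E.
Proof.
have m1 := mu1_pos w_icx mu_w w_jump.
have [M [M0 PM]] := Linf_bound X0_Linf.
have Q0le := qext_le M0 (quant_le M0 PM).
have mu01 : (mu `[0%R, 1%R]%classic < +oo)%E.
  have sub : (`[0%R, 1%R]%classic : set R) `<=` `]-oo, 1%R]%classic.
    by move=> x /=; rewrite !in_itv /= => /andP[].
  have := le_measure mu (mem_set (measurable_itv `[0%R, 1%R]))
    (mem_set (measurable_itv `]-oo, 1%R])) sub.
  move=> h; apply: (le_lt_trans h); have := mu_w 1%R; rewrite ltr10 lexx => h1.
  by rewrite [X in (X < _)%E](_ : _ = (w 1)%:E) ?ltry //; exact: h1.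
have Dfin : (\int[mu]_(s in `[0%R, 1%R]) qext (quantile P X0) s < +oo)%E.
  apply: (int_ub_nm _ mu01 M0) => //; exact: measurable_itv.
have q1 : qext (@Qs R) 1 = +oo%E.
  rewrite /qext; case: ifPn => [|_]; first by rewrite ltxx.
  by apply: cvg_lim => //; exact: Qs_cvgy.
have qge0 x : (0 <= qext (@Qs R) x)%E.
  rewrite /qext; case: ifPn => _; first by rewrite lee_fin Qs_ge0.
  by rewrite (_ : lim _ = +oo%E) ?leey //; apply: cvg_lim => //; exact: Qs_cvgy.
have Cinf : (\int[mu]_(s in `[0%R, 1%R]) qext (@Qs R) s = +oo)%E.
  apply/eqP; rewrite -leye_eq.
  have <- : (\int[mu]_(s in [set 1%R]) (cst +oo%E) s = +oo)%E.
    by rewrite integral_cst // gt0_mulye.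
  have -> : (\int[mu]_(s in [set 1%R]) (cst +oo%E) s = \int[mu]_(s in [set 1%R]) qext (@Qs R) s)%E.
    by apply: eq_integral => x /set_mem /= ->; rewrite q1.
  apply: le_int_nm => //.
  move=> x; rewrite /patch; case: ifPn => [/set_mem /= ->|_]; last by case: ifPn.
  by rewrite mem_set //= in_itv /= ler01 lexx.
have L : Lfunctional (@Qs R) (quantile P X0) (quantile P rho) mu beta lambda = -oo%E.
  rewrite /Lfunctional Cinf addye; last by rewrite eqe_oppLR /= lt_eqF.
  by rewrite /= addeNy.
apply/eqP; rewrite eq_le leNye andbT.
rewrite -L; apply: ereal_inf_lbound; exists (@Qs R) => //; exact: Qs_in.
Qed.
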